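(* Let $\mathcal{A}$ be a central S-ring over a finite group $G$ with $n=|G|$. Then the sets $\mathrm{tr}(X)$, $X\in\mathcal{S}(\mathcal{A})$, form a partition of $G$, and $\mathrm{tr}(\mathcal{A})=\mathrm{Span}_{\mathbb{Z}}\{\underline{\mathrm{tr}(X)}: X\in\mathcal{S}(\mathcal{A})\}$ is a central S-ring over $G$ contained in $\mathcal{A}$; it consists exactly of the elements of $\mathcal{A}$ fixed by all the linear maps $\underline{X}\mapsto\underline{X^{(m)}}$ ($X\in\mathcal{S}(\mathcal{A})$), $m$ coprime to $n$.
   Context: For a finite group $G$ with identity $e$ and $X\subseteq G$, write $\underline{X}=\sum_{x\in X}x\in\mathbb{Z}G$. A subring $\mathcal{A}$ of $\mathbb{Z}G$ is an S-ring over $G$ if there is a partition $\mathcal{S}(\mathcal{A})$ of $G$ (basic sets) such that $\{e\}\in\mathcal{S}(\mathcal{A})$, $X\in\mathcal{S}(\mathcal{A})\Rightarrow X^{-1}\in\mathcal{S}(\mathcal{A})$, and $\mathcal{A}$ is the $\mathbb{Z}$-span of $\{\underline{X}: X\in\mathcal{S}(\mathcal{A})\}$. $\mathcal{A}$ is central if $\mathcal{A}\subseteq\mathcal{Z}(\mathbb{Z}G)$. For an integer $m$, $X^{(m)}=\{x^m:x\in X\}$. The trace of $X\subseteq G$ is $\mathrm{tr}(X)=\bigcup_{m:\ \gcd(m,|G|)=1}X^{(m)}$. *)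

(* Defs.v *)
From HB Require Import structures.
From mathcomp Require Import all_boot all_order all_algebra all_fingroup.
Set Implicit Arguments. Unset Strict Implicit. Unset Printing Implicit Defensive.
Import GRing.Theory.
Local Open Scope ring_scope.

(* The integral group ring ZG, modelled as finitely supported functions G -> Z:
   a = sum_g a(g) g  is represented by g |-> a(g). *)
Notation grpring gT := {ffun gT -> int}.

Definition gr_mul (gT : finGroupType) (a b : grpring gT) : grpring gT :=
  [ffun z => \sum_(x : gT) a x * b ((x^-1 * z)%g)].

Definition ul (gT : finGroupType) (X : {set gT}) : grpring gT :=
  [ffun x => ((x \in X) : nat)%:Z].

Definition in_span (gT : finGroupType) (S : {set {set gT}}) (a : grpring gT) : Prop :=
  exists c : {set gT} -> int, a = \sum_(X in S) ul X *~ c X.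

Definition set_inv (gT : finGroupType) (X : {set gT}) : {set gT} :=
  [set (x^-1)%g | x in X].

Definition set_pow (gT : finGroupType) (X : {set gT}) (m : nat) : {set gT} :=
  [set (x ^+ m)%g | x in X].

(* S is the set of basic sets of an S-ring over G:
   a partition of G containing {e}, closed under inversion, whose Z-span is a
   subring of ZG (closed under multiplication; it contains 1 = underline {e}
   and is closed under addition by construction). *)
Definition is_Sring (gT : finGroupType) (S : {set {set gT}}) : Prop :=
  [/\ partition S [set: gT],
      [set 1%g] \in S,
      (forall X, X \in S -> set_inv X \in S) &
      (forall a b, in_span S a -> in_span S b -> in_span S (gr_mul a b))].

Definition is_central (gT : finGroupType) (S : {set {set gT}}) : Prop :=
  forall a, in_span S a -> forall b : grpring gT, gr_mul a b = gr_mul b a.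

(* tr(X) = union over m with gcd(m,|G|)=1 of X^(m); since x^|G| = 1, it
   suffices to take the residues 0 <= m < |G|. *)
Definition trace (gT : finGroupType) (X : {set gT}) : {set gT} :=
  \bigcup_(m < #|[set: gT]| | coprime m #|[set: gT]|) set_pow X m.

Definition trace_sets (gT : finGroupType) (S : {set {set gT}}) : {set {set gT}} :=
  [set trace X | X in S].

(* Main.v *)
Require Import Defs.
From HB Require Import structures.
From mathcomp Require Import all_boot all_order all_algebra all_fingroup.
From mathcomp Require Import all_solvable all_field.
From mathcomp Require Import zify.
Set Implicit Arguments. Unset Strict Implicit. Unset Printing Implicit Defensive.
Import GRing.Theory.
Local Open Scope ring_scope.


Section GRdef.
Variable gT : finGroupType.
Definition GR : Type := {ffun gT -> int}.
HB.instance Definition _ := GRing.Zmodule.on GR.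
Definition gr1 : GR := [ffun x => ((x == 1%g) : nat)%:Z].
Definition grm (a b : GR) : GR := gr_mul a b.

Lemma grmE (a b : GR) z : grm a b z = \sum_(x : gT) a x * b ((x^-1 * z)%g).
Proof. by rewrite /grm /gr_mul ffunE. Qed.

Lemma grmA : associative grm.
Proof.
move=> a b c; apply/ffunP => z; apply/esym; rewrite grmE.
under eq_bigr => x _ do rewrite grmE mulr_suml.
rewrite exchange_big /= grmE; apply: eq_bigr => y _.
rewrite grmE mulr_sumr /=.
rewrite (reindex_inj (mulgI y)) /=; apply: eq_bigr => u _.
by rewrite mulKg mulrA invMg mulgA.
Qed.

Lemma grm1l : left_id gr1 grm.
Proof.
move=> b; apply/ffunP => z; rewrite grmE (bigD1 1%g) //= big1 ?addr0.
  by rewrite ffunE eqxx invg1 mul1g mul1r.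
by move=> x /negbTE nx; rewrite ffunE nx mul0r.
Qed.

Lemma grm1r : right_id gr1 grm.
Proof.
move=> b; apply/ffunP => z; rewrite grmE (bigD1 z) //= big1 ?addr0.
  by rewrite ffunE mulVg eqxx mulr1.
move=> x nx; rewrite ffunE; case: eqP => [/eqP|]; last by rewrite mulr0.
by rewrite -(inj_eq (mulgI x)) mulKVg mulg1 eq_sym (negbTE nx).
Qed.

Lemma grmDl : left_distributive grm +%R.
Proof.
move=> a b c; apply/ffunP => z; rewrite grmE [in RHS]ffunE !grmE -big_split /=.
by apply: eq_bigr => x _; rewrite ffunE mulrDl.
Qed.

Lemma grmDr : right_distributive grm +%R.
Proof.
move=> a b c; apply/ffunP => z; rewrite grmE [in RHS]ffunE !grmE -big_split /=.
by apply: eq_bigr => x _; rewrite ffunE mulrDr.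
Qed.

Lemma gr1_neq0 : gr1 != 0.
Proof. by apply/eqP => /ffunP /(_ 1%g); rewrite !ffunE eqxx. Qed.

HB.instance Definition _ := GRing.Zmodule_isNzRing.Build GR
  grmA grm1l grm1r grmDl grmDr gr1_neq0.

Lemma mulGRE (a b : GR) : a * b = gr_mul a b. Proof. by []. Qed.
Lemma oneGRE : (1 : GR) = gr1. Proof. by []. Qed.
Lemma mulGR_E (a b : GR) z : (a * b) z = \sum_(x : gT) a x * b ((x^-1 * z)%g).
Proof. exact: grmE. Qed.
End GRdef.


Section Words.
Variable gT : finGroupType.
Implicit Types (a b : GR gT).

Definition wprod (s : seq gT) : gT := (\prod_(x <- s) x)%g.
Definition wt a (s : seq gT) : int := \prod_(x <- s) a x.

Lemma sum_tupleS k (F : k.+1.-tuple gT -> int) :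
  \sum_(t : k.+1.-tuple gT) F t =
  \sum_(x : gT) \sum_(t : k.-tuple gT) F [tuple of x :: t].
Proof.
rewrite pair_big /=.
rewrite (reindex (fun p : gT * k.-tuple gT => [tuple of p.1 :: p.2])) //=.
exists (fun t => (thead t, [tuple of behead t])).
  by move=> [x t] _ /=; rewrite /thead tnth0; congr pair; apply: val_inj.
by move=> t _; rewrite [RHS]tuple_eta.
Qed.

Lemma powE a k g : (a ^+ k) g =
  \sum_(t : k.-tuple gT | wprod t == g) wt a t.
Proof.
elim: k g => [|k IH] g.
  rewrite expr0 oneGRE /gr1 ffunE big_mkcond (big_pred1 [tuple]) /=; last first.
    by move=> t; apply/esym/eqP/tuple0.
  by rewrite /wprod /wt !big_nil eq_sym; case: eqP.
rewrite exprS mulGR_E [RHS]big_mkcond sum_tupleS /=; apply: eq_bigr => x _.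
rewrite IH mulr_sumr [LHS]big_mkcond /=; apply: eq_bigr => t _.
rewrite /wprod /wt !big_cons.
have -> : ((x * \prod_(y <- t) y)%g == g) = ((\prod_(y <- t) y)%g == (x^-1 * g)%g).
  by apply/eqP/eqP => [<-|->]; [rewrite mulKg | rewrite mulKVg].
by case: ifP.
Qed.
End Words.


Section FixMod.
Variables (T : finType) (p : nat) (f : {perm T}).
Hypothesis pr_p : prime p.
Hypothesis fp : (f ^+ p = 1)%g.
Local Open Scope group_scope.

Lemma card_fix_mod (S : {set T}) :
  (forall t, (f t \in S) = (t \in S)) ->
  #|S| = #|[set t in S | f t == t]| %[mod p].
Proof.
move=> fS.
have pG : p.-group <[f]>.
  rewrite /pgroup -orderE; apply: pnat_dvd (pnat_id pr_p).
  by rewrite order_dvdn fp.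
have actS : [acts <[f]>, on S | 'P].
  apply/actsP => g /cycleP[i ->] t /=; rewrite apermE permX.
  by elim: i => [|i IH] //=; rewrite fS IH.
rewrite (pgroup_fix_mod pG actS); congr (_ %% p)%N.
apply: eq_card => t; rewrite !inE; congr (_ && _).
apply/subsetP/eqP => [H | ft g /cycleP[i ->]].
  by have := H f (cycle_id f); rewrite inE => /eqP.
by rewrite inE; apply/eqP/permX_fix.
Qed.

Local Close Scope group_scope.
Lemma sum_fix_mod (S : {set T}) (F : T -> 'F_p) :
  (forall t, (f t \in S) = (t \in S)) -> (forall t, F (f t) = F t) ->
  \sum_(t in S) F t = \sum_(t in S | f t == t) F t.
Proof.
move=> fS fF.
rewrite (partition_big F (mem (F @: S))) /=; last by move=> t tS; apply: imset_f.
rewrite [RHS](partition_big F (mem (F @: S))) /=; last first.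
  by move=> t /andP[tS _]; apply: imset_f.
apply: eq_bigr => v _.
pose Sv := [set t in S | F t == v].
transitivity (\sum_(t in Sv) v).
  by apply: eq_big => [t|t /andP[_ /eqP->]] //; rewrite inE.
transitivity (\sum_(t in [set t in Sv | f t == t]) v); last first.
  apply/esym; apply: eq_big => [t|t /andP[_ /eqP->]] //.
  by rewrite /Sv !inE andbAC.
rewrite !sumr_const -[LHS]mulr_natr -[RHS]mulr_natr; congr (_ * _).
rewrite -Fp_nat_mod // (card_fix_mod (S := Sv)) ?Fp_nat_mod //.
by move=> t; rewrite !inE fS fF.
Qed.

End FixMod.


Section Rot.
Variables (gT : finGroupType) (k : nat).
Definition rot1 (t : k.-tuple gT) : k.-tuple gT := [tuple of seq.rot 1%N t].
Lemma rot1_inj : injective rot1.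
Proof. by move=> t1 t2 /(congr1 val) /rot_inj /val_inj. Qed.
Definition rotp : {perm k.-tuple gT} := perm rot1_inj.
Lemma rotpE t : rotp t = rot1 t. Proof. by rewrite permE. Qed.
Lemma rotp_exp : (rotp ^+ k = 1)%g.
Proof.
apply/permP => t; rewrite permX perm1.
suff H : forall i, (i <= k)%N -> val (iter i rotp t) = seq.rot i t.
  by apply: val_inj; rewrite H //; have := rot_size t; rewrite size_tuple.
elim=> [|i IH] Hi /=; first by rewrite seq.rot0.
by rewrite rotpE /= IH ?(ltnW Hi) // [RHS]rotS ?size_tuple.
Qed.

Lemma rcons_eq_cons (x : gT) s : rcons s x = x :: s -> s = nseq (size s) x.
Proof.
elim: s => //= y s IH [-> H]; congr (_ :: _); apply: IH.
by rewrite H.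
Qed.

Lemma rot1_fix_seq (s : seq gT) (x0 : gT) : seq.rot 1%N s = s -> forall y, y \in s -> y = nth x0 s 0%N.
Proof.
case: s => [|x s] //=.
rewrite rot1_cons => /rcons_eq_cons E y; rewrite inE => /predU1P [//|].
by rewrite E mem_nseq => /andP[_ /eqP].
Qed.

Lemma rot1_fix (t : k.-tuple gT) (x0 : gT) : rot1 t = t -> forall y, y \in t -> y = nth x0 t 0%N.
Proof. by move/(congr1 val) => /= /rot1_fix_seq; apply. Qed.
End Rot.

Section CFun.
Variable gT : finGroupType.
Definition cfun (a : GR gT) := forall x h : gT, a (x ^ h)%g = a x.

Lemma cfun1 : cfun 1.
Proof. by move=> x h; rewrite oneGRE !ffunE conjg_eq1. Qed.

Lemma cfunM a b : cfun a -> cfun b -> cfun (a * b).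
Proof.
move=> ca cb x h; rewrite !mulGR_E (reindex_inj (@conjg_inj _ h)) /=.
apply: eq_bigr => z _; rewrite ca -conjVg -conjMg cb //.
Qed.

Lemma cfunX a k : cfun a -> cfun (a ^+ k).
Proof.
move=> ca; elim: k => [|k IH]; first by rewrite expr0; exact: cfun1.
by rewrite exprS; apply: cfunM.
Qed.
End CFun.

Section WordsRot.
Variable gT : finGroupType.
Lemma wprod_rot1 (s : seq gT) : exists h, wprod (seq.rot 1%N s) = (wprod s ^ h)%g.
Proof.
case: s => [|x s]; first by exists 1%g; rewrite conjg1.
exists x; rewrite rot1_cons /wprod big_rcons big_cons /=.
by rewrite conjgE -mulgA mulKg.
Qed.

Lemma wt_rot1 (a : GR gT) (s : seq gT) : wt a (seq.rot 1%N s) = wt a s.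
Proof. by apply: perm_big; rewrite perm_rot. Qed.

Lemma wprod_nseq k (x : gT) : wprod (nseq k x) = (x ^+ k)%g.
Proof. by rewrite /wprod big_nseq iter_mulg_1. Qed.

Lemma wt_nseq (a : GR gT) k (x : gT) : wt a (nseq k x) = a x ^+ k.
Proof. by rewrite /wt big_nseq; elim: k => //= k ->; rewrite exprS. Qed.

Lemma rot1_nseq k (x : gT) : seq.rot 1%N (nseq k x) = nseq k x.
Proof.
case: k => // k; rewrite /= rot1_cons.
by elim: k => //= k ->.
Qed.
End WordsRot.

Section Frob.
Variables (gT : finGroupType) (p : nat).
Hypothesis pr_p : prime p.
Hypothesis cop : coprime p #|[set: gT]|.
Definition toF (z : int) : 'F_p := z%:~R.

Lemma pow_inj : injective (fun x : gT => (x ^+ p)%g).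
Proof.
have cop' : coprime #|[set: gT]| p by rewrite coprime_sym.
move=> x z /= E.
by rewrite -(expgK cop' (in_setT x)) /= E (expgK cop' (in_setT z)).
Qed.

Lemma fermatF (u : 'F_p) : u ^+ p = u.
Proof. by have := expf_card u; rewrite card_Fp. Qed.

Lemma frob (a : GR gT) : cfun a -> forall y, toF ((a ^+ p) (y ^+ p)%g) = toF (a y).
Proof.
move=> ca y; set g := (y ^+ p)%g.
pose C := (g ^: [set: gT])%g.
have CJ u h : (u ^ h \in C)%g = (u \in C).
  apply/imsetP/imsetP => [[h1 _ E]|[h1 _ ->]].
    by exists (h1 * h^-1)%g; rewrite ?inE // conjgM -E conjgK.
  by exists (h1 * h)%g; rewrite ?inE // conjgM.
have cardC : coprime p #|C|.
  by rewrite -(index_cent1 [group of [set: gT]]); apply: coprime_dvdr (dvdn_indexg _ _) cop.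
pose S := [set t : p.-tuple gT | wprod t \in C].
have key1 : \sum_(u in C) toF ((a ^+ p) u) = #|C|%:R * toF ((a ^+ p) g).
  rewrite mulr_natl -sumr_const; apply: eq_bigr => u /imsetP[h _ ->].
  by rewrite cfunX.
have key2 : \sum_(u in C) toF ((a ^+ p) u) = \sum_(t in S) toF (wt a t).
  rewrite [RHS](partition_big (fun t : p.-tuple gT => wprod t) (mem C)) /=; last by move=> t; rewrite inE.
  apply: eq_bigr => u uC; rewrite powE /toF rmorph_sum; apply: eq_bigl => t.
  by rewrite inE; case: eqP => [->|]; rewrite ?uC ?andbF.
have key3 : \sum_(t in S) toF (wt a t) = \sum_(t in S | rotp gT p t == t) toF (wt a t).
  apply: sum_fix_mod => //; first exact: rotp_exp.
    move=> t; rewrite !inE rotpE /=.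
    by have [h ->] := wprod_rot1 t; rewrite CJ.
  by move=> t; rewrite rotpE /= wt_rot1.
have p_gt0 : (0 < p)%N by apply: prime_gt0.
have key4 : \sum_(t in S | rotp gT p t == t) toF (wt a t) =
            \sum_(x | (x ^+ p)%g \in C) toF (a x).
  rewrite (reindex_onto (fun x : gT => [tuple of nseq p x]) (fun t => nth 1%g t 0%N)) /=.
    apply: eq_big => x.
      have R : rot1 [tuple of nseq p x] = [tuple of nseq p x].
        by apply: val_inj; exact: rot1_nseq.
      by rewrite inE rotpE R eqxx /= wprod_nseq nth_nseq p_gt0 eqxx !andbT.
    by move=> _; rewrite wt_nseq /toF rmorphXn fermatF.
  move=> t /andP[_ /eqP]; rewrite rotpE => /(rot1_fix 1%g) H.
  have /all_pred1P E : all (pred1 (nth 1%g t 0%N)) t by apply/allP => z /H /eqP.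
  by apply: val_inj => /=; apply/esym; rewrite {1}E size_tuple.
have key5 : \sum_(x | (x ^+ p)%g \in C) toF (a x) = #|C|%:R * toF (a y).
  transitivity (\sum_(x in (fun x : gT => x ^+ p)%g @^-1: C) toF (a y)).
    apply: eq_big => x; first by rewrite inE.
    move=> /imsetP[h _ E]; congr toF.
    have -> : x = (y ^ h)%g by apply: pow_inj; rewrite /= E conjXg.
    exact: ca.
  by rewrite sumr_const card_preimset ?mulr_natl //; exact: pow_inj.
have U : (#|C|%:R : 'F_p) \is a GRing.unit by rewrite unitFpE.
by apply: (mulrI U); rewrite -key1 key2 key3 key4 key5.
Qed.
End Frob.


Lemma big_prime_rep (m n B : nat) : coprime m n ->
  exists m', m' = m %[mod n] /\ forall q, prime q -> (q %| m')%N -> (B < q)%N.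
Proof.
move=> cmn.
pose t := (\prod_(q < B.+1 | prime q && ~~ (q %| m)) q)%N.
exists (m + n * t)%N; split; first by rewrite addnC mulnC modnMDl.
move=> q pq; rewrite ltnNge; apply: contraL => qB.
case qm : (q %| m)%N.
  rewrite dvdn_addr // Euclid_dvdM // negb_or; apply/andP; split.
    apply: contraL cmn => qn; rewrite /coprime; apply/negP => /eqP g1.
    have : (q %| gcdn m n)%N by rewrite dvdn_gcd qm qn.
    by rewrite g1 dvdn1 => /eqP q1; rewrite q1 in pq.
  rewrite Euclid_dvd_prod //.
  elim/big_ind: _ => //[x y /negbTE-> /negbTE-> //|r /andP[pr nrm]].
  by rewrite dvdn_prime2 //; apply: contra nrm => /eqP <-.
have qt : (q %| t)%N.
  rewrite /t (bigD1 (Ordinal (qB : (q < B.+1)%N))) /= ?pq ?qm //.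
  exact: dvdn_mulr.
by rewrite dvdn_addl ?qm // dvdn_mull.
Qed.


Section GroupPow.
Variable gT : finGroupType.
Local Notation n := #|[set: gT]|.

Lemma pow_mod (a b : nat) (x : gT) : a = b %[mod n] -> (x ^+ a = x ^+ b)%g.
Proof.
move=> E; apply/eqP; rewrite eq_expg_mod_order.
have Hd : (#[x]%g %| n)%N := order_dvdG (in_setT x).
by rewrite -(modn_dvdm a Hd) -(modn_dvdm b Hd) E.
Qed.

Lemma powk_inj k : coprime k n -> injective (fun x : gT => (x ^+ k)%g).
Proof.
move=> cop x z /= E; have cop' : coprime n k by rewrite coprime_sym.
by rewrite -(expgK cop' (in_setT x)) /= E (expgK cop' (in_setT z)).
Qed.

Lemma powk_surj k : coprime k n -> forall g : gT, exists x, g = (x ^+ k)%g.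
Proof.
move=> cop g; have cop' : coprime n k by rewrite coprime_sym.
exists (g ^+ expg_invn [set: gT] k)%g.
by rewrite -expgM mulnC expgM (expgK cop' (in_setT g)).
Qed.
End GroupPow.


Section Part.
Variables (gT : finGroupType) (S : {set {set gT}}).
Hypothesis partS : partition S [set: gT].

Lemma trivS : trivIset S. Proof. by case/and3P: partS. Qed.
Lemma coverS x : x \in cover S. Proof. by case/and3P: partS => /eqP-> _ _; rewrite inE. Qed.
Lemma S0 : set0 \notin S. Proof. by case/and3P: partS. Qed.
Lemma pblockS x : pblock S x \in S. Proof. exact: pblock_mem (coverS x). Qed.
Lemma mem_pblockS x : x \in pblock S x. Proof. by rewrite mem_pblock coverS. Qed.
Lemma pblock_eq X x : X \in S -> x \in X -> pblock S x = X.
Proof. exact: def_pblock trivS. Qed.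
Lemma mem_blockE X x : X \in S -> (x \in X) = (pblock S x == X).
Proof.
move=> XS; apply/idP/eqP => [/(pblock_eq XS)//|<-]; exact: mem_pblockS.
Qed.
Lemma nonemptyS X : X \in S -> exists x, x \in X.
Proof. by move=> XS; apply/set0Pn; apply: contraNneq S0 => <-. Qed.

Lemma span_eval (c : {set gT} -> int) x :
  (\sum_(X in S) ul X *~ c X : grpring gT) x = c (pblock S x).
Proof.
rewrite sum_ffunE (bigD1 (pblock S x)) ?pblockS //= big1 ?addr0.
  by rewrite ffunMzE ffunE mem_pblockS mulrzz mul1r.
move=> X /andP[XS nX]; rewrite ffunMzE ffunE.
case xX: (x \in X); last by rewrite mul0rz.
by rewrite (pblock_eq XS xX) eqxx in nX.
Qed.

Lemma spanP a : in_span S a <-> (forall x y, pblock S x = pblock S y -> a x = a y).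
Proof.
split=> [[c ->] x y E|H]; first by rewrite !span_eval E.
exists (fun X => a (repr X)); apply/ffunP => x; rewrite span_eval; apply: H.
by rewrite (pblock_eq (pblockS x) (mem_repr _ (mem_pblockS x))).
Qed.

Lemma span_ul X : X \in S -> in_span S (ul X).
Proof.
move=> XS; apply/spanP => x y E; rewrite !ffunE !(mem_blockE _ XS) E //.
Qed.
End Part.

Section Delta.
Variable gT : finGroupType.
Lemma mul_delta_r (a : grpring gT) h z : gr_mul a (ul [set h]) z = a (z * h^-1)%g.
Proof.
rewrite /gr_mul ffunE (bigD1 (z * h^-1)%g) //= big1 ?addr0.
  by rewrite ffunE invMg invgK -mulgA mulVg mulg1 inE eqxx mulr1.
move=> y ny; rewrite ffunE inE; case: eqP => [E|]; last by rewrite mulr0.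
by rewrite -E invMg invgK mulKVg eqxx in ny.
Qed.

Lemma mul_delta_l (a : grpring gT) h z : gr_mul (ul [set h]) a z = a (h^-1 * z)%g.
Proof.
rewrite /gr_mul ffunE (bigD1 h) //= big1 ?addr0.
  by rewrite ffunE inE eqxx mul1r.
by move=> y ny; rewrite ffunE inE (negbTE ny) mul0r.
Qed.

Lemma powX_set (W : {set gT}) a b : set_pow (set_pow W a) b = set_pow W (a * b).
Proof.
apply/setP => u; apply/imsetP/imsetP => [[v /imsetP[x xW ->] ->]|[x xW ->]].
  by exists x => //; rewrite expgM.
by exists (x ^+ a)%g; [apply: imset_f | rewrite expgM].
Qed.

Lemma pow_set_mod (W : {set gT}) a b : a = b %[mod #|[set: gT]|] -> set_pow W a = set_pow W b.
Proof.
move=> E; apply/setP => u; apply/imsetP/imsetP => [[x xW ->]|[x xW ->]];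
  by exists x => //; rewrite (pow_mod _ E).
Qed.

Lemma mem_pow_set (W : {set gT}) k x : coprime k #|[set: gT]| ->
  ((x ^+ k)%g \in set_pow W k) = (x \in W).
Proof.
move=> ck; apply/imsetP/idP => [[y yW /(powk_inj ck) ->] //|xW].
by exists x.
Qed.

Lemma pow_setS (W V : {set gT}) k : W \subset V -> set_pow W k \subset set_pow V k.
Proof. exact: imsetS. Qed.
End Delta.

Section SRing.
Variables (gT : finGroupType) (S : {set {set gT}}).
Hypothesis hS : is_Sring S.
Hypothesis hC : is_central S.
Local Notation n := #|[set: gT]|.

Lemma partS : partition S [set: gT]. Proof. by case: hS. Qed.
Let pS := partS.

Lemma span1 : in_span S (1 : GR gT).
Proof.
have -> : (1 : GR gT) = ul [set 1%g] by apply/ffunP => x; rewrite oneGRE !ffunE inE.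
by apply: span_ul => //; case: hS.
Qed.

Lemma spanM (a b : GR gT) : in_span S a -> in_span S b -> in_span S (a * b).
Proof. by case: hS => _ _ _; apply. Qed.

Lemma spanX (a : GR gT) k : in_span S a -> in_span S (a ^+ k).
Proof.
move=> sa; elim: k => [|k IH]; first by rewrite expr0; exact: span1.
by rewrite exprS; apply: spanM.
Qed.

Lemma span_cfun (a : GR gT) : in_span S a -> cfun a.
Proof.
move=> sa x h; have := congr1 (fun f : grpring gT => f (x * h)%g) (hC sa (ul [set h])).
by rewrite /= mul_delta_r mul_delta_l mulgK conjgE mulgA.
Qed.

Definition closedS (W : {set gT}) :=
  forall x y, pblock S x = pblock S y -> (x \in W) = (y \in W).

Lemma closed_block Y : Y \in S -> closedS Y.
Proof. by move=> YS x y E; rewrite !(mem_blockE pS _ YS) E. Qed.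

Lemma schur_closed p X : prime p -> coprime p n -> X \in S -> closedS (set_pow X p).
Proof.
move=> pp cp XS x y E.
have cp' : coprime p n := cp.
have /spanP H := spanX p (span_ul pS XS).
have := H pS x y E.
have [x' ->] := powk_surj cp x; have [y' ->] := powk_surj cp y.
rewrite !mem_pow_set // => Hxy.
have := congr1 (toF p) Hxy; rewrite !(frob pp cp (span_cfun (span_ul pS XS))).
rewrite /toF !ffunE.
case: (x' \in X); case: (y' \in X) => //= /eqP; rewrite ?oner_eq0 // eq_sym oner_eq0 //.
Qed.

Lemma closed_pow W p : prime p -> coprime p n -> closedS W -> closedS (set_pow W p).
Proof.
move=> pp cp cW.
suff H : forall x y, pblock S x = pblock S y -> x \in set_pow W p -> y \in set_pow W p.
  by move=> x y E; apply/idP/idP; apply: H.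
move=> x y E /imsetP[w wW xE].
have sch := schur_closed pp cp (pblockS pS w).
have : x \in set_pow (pblock S w) p by rewrite xE; apply: imset_f; apply: mem_pblockS.
rewrite (sch x y E) => /imsetP[v vB ->]; apply: imset_f.
by rewrite -(cW w v) // (pblock_eq pS (pblockS pS w) vB).
Qed.

Lemma closed_powX W p k : prime p -> coprime p n -> closedS W -> closedS (set_pow W (p ^ k)).
Proof.
move=> pp cp cW; elim: k => [|k IH].
  by rewrite expn0; move=> x y E; rewrite -{1}(expg1 x) -{1}(expg1 y) !mem_pow_set ?coprime1n //; exact: cW.
by rewrite expnSr -powX_set; apply: closed_pow.
Qed.

Lemma schur_prime p X : prime p -> coprime p n -> X \in S -> set_pow X p \in S.
Proof.
move=> pp cp XS; have [x0 x0X] := nonemptyS pS XS.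
set y := (x0 ^+ p)%g.
have yXp : y \in set_pow X p by apply: imset_f.
have cXp := schur_closed pp cp XS.
set phi := totient n.
have phi_gt0 : (0 < phi)%N by rewrite totient_gt0 cardG_gt0.
have Eul : (p ^ phi = 1 %[mod n])%N by apply: Euler_exp_totient.
have powid (u : gT) : (u ^+ (p * p ^ phi.-1) = u)%g.
  by rewrite -expnS prednK // (@pow_mod _ _ _ u Eul) expg1.
set Y := pblock S y.
have YXp : forall v, v \in Y -> v \in set_pow X p.
  by move=> v vY; rewrite (cXp v y) // (pblock_eq pS (pblockS pS y) vY).
suff -> : set_pow X p = Y by apply: pblockS.
apply/setP => z; apply/idP/idP; last exact: YXp.
set W := set_pow Y (p ^ phi.-1).
have cW : closedS W by apply: closed_powX => //; apply: closed_block; apply: pblockS.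
have WX : forall u, u \in W -> u \in X.
  move=> u /imsetP[v /YXp /imsetP[x xX ->] ->].
  by rewrite -expgM powid.
have XW : forall x, x \in X -> x \in W.
  have w0W : (y ^+ (p ^ phi.-1))%g \in W by apply: imset_f; apply: mem_pblockS.
  move=> x xX; rewrite (cW x (y ^+ (p ^ phi.-1))%g) //.
  by rewrite (pblock_eq pS XS xX) (pblock_eq pS XS (WX _ w0W)).
case/imsetP => x /XW /imsetP[v vY ->] ->.
by rewrite -expgM mulnC powid.
Qed.

Lemma schur m0 X0 : coprime m0 n -> X0 \in S -> set_pow X0 m0 \in S.
Proof.
elim: m0.+1 {-2}m0 (ltnSn m0) X0 => // N IH m ltm X cm XS.
case: m ltm cm => [|[|m]] ltm cm.
- have n1 : n = 1%N by move: cm; rewrite /coprime gcd0n => /eqP.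
  have [x0 x0X] := nonemptyS pS XS.
  have -> : set_pow X 0 = [set 1%g].
    apply/setP => u; rewrite inE; apply/imsetP/eqP => [[x _ ->] //|->].
    by exists x0.
  by case: hS.
- have -> : set_pow X 1 = X.
    by apply/setP => u; apply/imsetP/idP => [[x xX ->]|uX]; [rewrite expg1 | exists u; rewrite ?expg1].
  exact: XS.
- set M := m.+2 in ltm cm *.
  have M1 : (1 < M)%N by [].
  have pq := pdiv_prime M1; set q := pdiv M in pq.
  have qM : (q %| M)%N := pdiv_dvd M.
  have EM : (M %/ q * q = M)%N by rewrite divnK.
  have cq : coprime q n := coprime_dvdl qM cm.
  have cMq : coprime (M %/ q) n.
    apply: coprime_dvdl cm; rewrite -{2}EM; exact: dvdn_mulr.
  rewrite -EM -powX_set; apply: schur_prime => //.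
  apply: IH => //.
  exact: leq_trans (ltn_Pdiv (prime_gt1 pq) (ltnW M1)) ltm.
Qed.
End SRing.


Section TraceBasic.
Variable gT : finGroupType.
Local Notation n := #|[set: gT]|.

Lemma pow_set1 (X : {set gT}) : set_pow X 1 = X.
Proof.
by apply/setP => u; apply/imsetP/idP => [[x xX ->]|uX]; [rewrite expg1 | exists u; rewrite ?expg1].
Qed.

Lemma mem_traceP (X : {set gT}) x :
  reflect (exists2 m, coprime m n & x \in set_pow X m) (x \in trace X).
Proof.
apply: (iffP bigcupP) => [[i ci xi]|[m cm xm]]; first by exists i.
have n_gt0 : (0 < n)%N by rewrite cardG_gt0.
exists (Ordinal (ltn_pmod m n_gt0)); first by rewrite /= coprime_modl.
by rewrite /= (@pow_set_mod _ _ (m %% n) m) // modn_mod.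
Qed.

Lemma trace_sub (X : {set gT}) : X \subset trace X.
Proof. by apply/subsetP => x xX; apply/mem_traceP; exists 1%N; rewrite ?coprime1n ?pow_set1. Qed.
End TraceBasic.

Section Trace.
Variables (gT : finGroupType) (S : {set {set gT}}).
Hypothesis hS : is_Sring S.
Hypothesis hC : is_central S.
Local Notation n := #|[set: gT]|.
Let pS := partS hS.
Local Notation T := (trace_sets S).

Lemma trace_inc X Y z : X \in S -> Y \in S -> z \in trace X -> z \in trace Y ->
  trace Y \subset trace X.
Proof.
move=> XS YS /mem_traceP[m cm /imsetP[x xX zx]] /mem_traceP[k ck /imsetP[y yY zy]].
set phi := totient n.
have phi_gt0 : (0 < phi)%N by rewrite totient_gt0 cardG_gt0.
have Eul : (k ^ phi = 1 %[mod n])%N by apply: Euler_exp_totient.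
set e := (m * k ^ phi.-1)%N.
have ce : coprime e n by rewrite coprimeMl cm coprimeXl.
have yx : y = (x ^+ e)%g.
  rewrite -[LHS]expg1 -(@pow_mod _ _ _ y Eul) -(prednK phi_gt0) expnS expgM -zy zx.
  by rewrite -expgM.
have YE : Y = set_pow X e.
  rewrite -(pblock_eq pS YS yY); apply: pblock_eq => //; first exact: schur.
  by rewrite yx; apply: imset_f.
apply/subsetP => u /mem_traceP[j cj]; rewrite YE powX_set => uj.
by apply/mem_traceP; exists (e * j)%N => //; rewrite coprimeMl ce.
Qed.

Lemma trace_block x : trace (pblock S x) \in T.
Proof. by apply: imset_f; apply: pblockS. Qed.

Lemma mem_trace_block x : x \in trace (pblock S x).
Proof. exact: (subsetP (trace_sub _)) (mem_pblockS pS x). Qed.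

Lemma partT : partition T [set: gT].
Proof.
apply/and3P; split.
- apply/eqP/setP => x; rewrite inE; apply/bigcupP.
  by exists (trace (pblock S x)); [apply: trace_block | apply: mem_trace_block].
- apply/trivIsetP => A B /imsetP[X XS ->] /imsetP[Y YS ->] nXY.
  rewrite -setI_eq0; apply/eqP/setP => z; rewrite !inE; apply/negbTE/negP => /andP[zX zY].
  apply: (negP nXY).
  by rewrite eqEsubset !(trace_inc _ _ zX zY) // (trace_inc _ _ zY zX).
- apply/imsetP => [[X XS E]].
  have [x xX] := nonemptyS pS XS.
  by have := subsetP (trace_sub X) x xX; rewrite -E inE.
Qed.

Lemma pblockT x : pblock T x = trace (pblock S x).
Proof. by apply: (pblock_eq partT); [exact: trace_block | exact: mem_trace_block]. Qed.

Definition inv_pow (a : GR gT) := forall x m, coprime m n -> a (x ^+ m)%g = a x.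

Lemma spanT (a : GR gT) : in_span T a <-> in_span S a /\ inv_pow a.
Proof.
have [T1 T2] := spanP partT a; have [S1 S2] := spanP pS a.
split => [/T1 H|[/S1 H1 H2]]; last apply: T2 => x y.
  split=> [|x m cm]; first by apply: S2 => x y E; apply: H; rewrite !pblockT E.
  apply: H; rewrite !pblockT; apply/eqP; rewrite eqEsubset.
  have z1 : (x ^+ m)%g \in trace (pblock S x).
    by apply/mem_traceP; exists m => //; apply: imset_f; apply: mem_pblockS.
  have z2 := mem_trace_block (x ^+ m)%g.
  by rewrite (trace_inc (pblockS pS _) (pblockS pS _) z1 z2) (trace_inc (pblockS pS _) (pblockS pS _) z2 z1).
rewrite !pblockT => E.
have : y \in trace (pblock S x) by rewrite E; apply: mem_trace_block.
case/mem_traceP => m cm /imsetP[x1 x1B ->].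
by rewrite H2 //; apply: H1; rewrite (pblock_eq pS (pblockS pS x) x1B).
Qed.
End Trace.

Import Order.TTheory Num.Theory.

Lemma toF_small q (z : int) : prime q -> toF q z = 0 -> `|z| < q%:Z -> z = 0.
Proof.
move=> pq; case: z => k; rewrite /toF.
  move=> /(congr1 val) /=; rewrite val_Fp_nat // => Hk.
  by rewrite ger0_norm // ltz_nat => kq; rewrite modn_small // in Hk; rewrite Hk.
move/eqP; rewrite NegzE mulrNz oppr_eq0 => /eqP.
have -> : ((k.+1)%:Z%:~R : 'F_q) = (k.+1)%:R by [].
move=> /(congr1 val) /=; rewrite val_Fp_nat // => Hk.
rewrite normrN ger0_norm // ltz_nat => kq.
by rewrite modn_small in Hk.
Qed.

Lemma toF_sum q (I : finType) (F : I -> int) : toF q (\sum_i F i) = \sum_i toF q (F i).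
Proof. exact: rmorph_sum. Qed.
Lemma toF_mulz q (x y : int) : toF q (x * y) = toF q x * toF q y.
Proof. exact: intrM. Qed.
Lemma toF_subz q (x y : int) : toF q (x - y) = toF q x - toF q y.
Proof. exact: intrB. Qed.

Section Mult.
Variables (gT : finGroupType) (S : {set {set gT}}).
Hypothesis hS : is_Sring S.
Hypothesis hC : is_central S.
Local Notation n := #|[set: gT]|.

Lemma toF_pow_inv q (a : GR gT) : prime q -> coprime q n -> in_span S a -> inv_pow a ->
  forall u, toF q ((a ^+ q) u) = toF q (a u).
Proof.
move=> pq cq sa ia u; have [v ->] := powk_surj cq u.
by rewrite (frob pq cq (span_cfun hC sa)) ia.
Qed.

Lemma toF_mul q (a b a' b' : GR gT) : (forall u, toF q (a u) = toF q (a' u)) ->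
  (forall u, toF q (b u) = toF q (b' u)) -> forall u, toF q ((a * b) u) = toF q ((a' * b') u).
Proof.
move=> Ha Hb u; rewrite !mulGR_E !toF_sum; apply: eq_bigr => x _.
by rewrite !toF_mulz Ha Hb.
Qed.

Lemma norm_mul_bound (a b : GR gT) u :
  `|(a * b) u| <= \sum_x `|a x| * \sum_y `|b y|.
Proof.
rewrite mulGR_E; apply: le_trans (ler_norm_sum _ _ _) _; apply: ler_sum => x _.
rewrite normrM; apply: ler_wpM2l => //; rewrite (bigD1 (x^-1 * u)%g) //= lerDl sumr_ge0 //.
Qed.

Lemma inv_mul (a b : GR gT) : in_span S a -> inv_pow a -> in_span S b -> inv_pow b ->
  inv_pow (a * b).
Proof.
move=> sa ia sb ib.
set c := a * b.
have sc : in_span S c := spanM hS sa sb.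
have cc := span_cfun hC sc.
have comm_ab : GRing.comm a b by apply: (hC sa b).
set K := \sum_x `|a x| * \sum_y `|b y|.
have K0 : 0 <= K by apply: sumr_ge0 => x _; apply: mulr_ge0 => //; apply: sumr_ge0.
set B := ((n + 2 * `|K|%N).+2)%N.
have n_gt0 : (0 < n)%N by rewrite cardG_gt0.
have step : forall q, prime q -> (B < q)%N -> forall x, c (x ^+ q)%g = c x.
  move=> q pq Bq x.
  have cq : coprime q n.
    rewrite prime_coprime // gtnNdvd //; move: Bq; rewrite /B; lia.
  have E1 : toF q (c x) = toF q ((a ^+ q * b ^+ q) (x ^+ q)%g).
    by rewrite -exprMn_comm // (frob pq cq cc).
  have E2 : toF q ((a ^+ q * b ^+ q) (x ^+ q)%g) = toF q (c (x ^+ q)%g).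
    by apply: toF_mul; apply: toF_pow_inv.
  have : toF q (c x - c (x ^+ q)%g) = 0 by rewrite toF_subz E1 E2 subrr.
  move/toF_small => H; apply/eqP; rewrite eq_sym -subr_eq0; apply/eqP; apply: H => //.
  apply: le_lt_trans (ler_normB _ _) _.
  apply: (@le_lt_trans _ _ (K + K)); first by apply: lerD; apply: norm_mul_bound.
  have -> : K = (`|K|%N)%:Z by rewrite abszE ger0_norm.
  rewrite -PoszD ltz_nat; move: Bq; rewrite /B; lia.
have gen : forall k, (forall q, prime q -> (q %| k)%N -> (B < q)%N) -> forall x, c (x ^+ k)%g = c x.
  move=> k0; elim: k0.+1 {-2}k0 (ltnSn k0) => // N IH k ltk Hk x.
  case: k ltk Hk => [|[|k]] ltk Hk.
  - by have := Hk 2%N isT (dvdn0 2).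
  - by rewrite expg1.
  set M := k.+2 in ltk Hk *.
  have M1 : (1 < M)%N by [].
  have pq := pdiv_prime M1; set q := pdiv M in pq.
  have qM : (q %| M)%N := pdiv_dvd M.
  have EM : (M %/ q * q = M)%N by rewrite divnK.
  rewrite -EM expgM step ?Hk //.
  apply: IH.
    exact: leq_trans (ltn_Pdiv (prime_gt1 pq) (ltnW M1)) ltk.
  move=> r pr rd; apply: Hk => //; apply: dvdn_trans rd _.
  by rewrite -{2}EM dvdn_mulr.
move=> x m cm.
have [m' [Em' Hm']] := big_prime_rep B cm.
by rewrite -(@pow_mod _ _ _ x Em'); apply: gen.
Qed.
End Mult.

Unset Implicit Arguments. Set Strict Implicit.

Theorem mainTheorem7 (gT : finGroupType) (S : {set {set gT}}) :
  is_Sring S -> is_central S ->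
  [/\ partition (trace_sets S) [set: gT],
      is_Sring (trace_sets S) /\ is_central (trace_sets S),
      (forall a, in_span (trace_sets S) a -> in_span S a) &
      (forall a : grpring gT,
         in_span (trace_sets S) a <->
         (in_span S a /\
          forall (m : nat), coprime m #|[set: gT]| ->
          forall c : {set gT} -> int,
            a = \sum_(X in S) ul X *~ c X ->
            \sum_(X in S) ul (set_pow X m) *~ c X = a))].
Proof.
move=> hS hC.
have pS := partS hS.
have pT := partT hS hC.
split => //.
- split.
    split => //.
    + apply/imsetP; exists [set 1%g]; first by case: hS.
      apply/setP => u; rewrite inE; apply/eqP/mem_traceP => [->|[m _ /imsetP[x /set1P -> ->]]].
        by exists 1%N; rewrite ?coprime1n // pow_set1 inE.
      by rewrite expg1n.
    + move=> A /imsetP[X XS ->]; apply/imsetP; exists (set_inv X).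
        by case: hS => _ _ H _; apply: H.
      apply/setP => u; apply/imsetP/mem_traceP.
        case=> v /mem_traceP[m cm /imsetP[x xX ->]] ->.
        exists m => //; apply/imsetP; exists (x^-1)%g; first by apply: imset_f.
        by rewrite expVgn.
      case=> m cm /imsetP[w /imsetP[x xX ->] ->].
      exists (x ^+ m)%g; last by rewrite expVgn.
      by apply/mem_traceP; exists m => //; apply: imset_f.
    + move=> a b /(spanT hS hC)[sa ia] /(spanT hS hC)[sb ib].
      change (in_span (trace_sets S) ((a : GR gT) * b)).
      apply/(spanT hS hC); split; first exact: (spanM hS).
      exact: (inv_mul hS hC).
  move=> a /(spanT hS hC)[sa _]; exact: hC.
- by move=> a /(spanT hS hC)[].
move=> a; split.
  move=> /(spanT hS hC)[sa ia]; split => // m cm c Ea.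
  apply/ffunP => g; have [x ->] := powk_surj cm g.
  transitivity ((\sum_(X in S) ul X *~ c X : grpring gT) x).
    rewrite !sum_ffunE; apply: eq_bigr => X _.
    by rewrite !ffunMzE !ffunE mem_pow_set.
  by rewrite -Ea ia.
case=> sa H; apply/(spanT hS hC); split => // x m cm.
have [c Ea] := sa.
have := congr1 (fun f : grpring gT => f (x ^+ m)%g) (H m cm c Ea).
rewrite /= sum_ffunE => <-.
transitivity ((\sum_(X in S) ul X *~ c X : grpring gT) x).
  rewrite sum_ffunE; apply: eq_bigr => X _.
  by rewrite !ffunMzE !ffunE mem_pow_set.
by rewrite -Ea.
Qed.
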